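(* In the two-state model with $\delta(t)=\tfrac12e^{-t}+\tfrac12e^{-2t}$, $g_1(a)=-a^2$ and $g_2(b)=2-(1-b)^2$, the generator $Q^*\sim(5/12,7/12)$ is the unique weak equilibrium, and it is a strong equilibrium.
   Context: Two-state model: $S=\{1,2\}$, admissible rows unrestricted ($D_i=E_i$), so every admissible generator has the form $Q=\begin{pmatrix}-a&a\\ b&-b\end{pmatrix}$ with $a,b\ge0$, written $Q\sim(a,b)$. The payoff is $f(t,1,(-a,a))=\delta(t)g_1(a)$ and $f(t,2,(b,-b))=\delta(t)g_2(b)$. $X$ is a continuous-time Markov chain with generator $Q$; $F(i,Q)=\mathbb E_{i,Q}[\int_0^\infty f(t,X_t,Q_{X_t})dt]$. $Q\otimes_\varepsilon Q'$: generator $Q$ on $[0,\varepsilon]$, then $Q'$ on $(\varepsilon,\infty)$, with expected payoff $F(i,Q\otimes_\varepsilon Q')$. $Q^*$ is a weak equilibrium if $\liminf_{\varepsilon\downarrow0}\varepsilon^{-1}(F(i,Q^* )-F(i,Q\otimes_\varepsilon Q^* ))\ge0$ for all admissible $Q$ and $i\in S$; a strong equilibrium if for every $i,Q$ there is $\varepsilon>0$ with $F(i,Q^* )\ge F(i,Q\otimes_{\varepsilon'}Q^* )$ for all $0<\varepsilon'\le\varepsilon$. *)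

(* Defs.v *)
From Stdlib Require Import Reals Lra ClassicalEpsilon.
Open Scope R_scope.

Inductive state := S1 | S2.

(** A generator Q = [[-a, a], [b, -b]] is represented by the pair (a, b). *)
Definition gen := (R * R)%type.
Definition admissible (q : gen) : Prop := 0 <= fst q /\ 0 <= snd q.

Definition has_integral (f : R -> R) (a b v : R) : Prop :=
  exists pr : Riemann_integrable f a b, RiemannInt pr = v.

Definition has_improper_integral (f : R -> R) (a v : R) : Prop :=
  (forall T, a <= T -> exists pr : Riemann_integrable f a T, True) /\
  (forall eps, 0 < eps -> exists M, forall T (pr : Riemann_integrable f a T),
      a <= T -> M <= T -> Rabs (RiemannInt pr - v) < eps).

Definition integral (f : R -> R) (a b : R) : R :=
  epsilon (inhabits 0) (fun v => has_integral f a b v).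
Definition improper_integral (f : R -> R) (a : R) : R :=
  epsilon (inhabits 0) (fun v => has_improper_integral f a v).

(** Transition probabilities P_t = exp(tQ) of the two-state chain with
    generator (a,b):  with s = a+b and phi(t) = int_0^t e^{-s u} du,
    P_12(t) = a phi(t), P_21(t) = b phi(t). *)
Definition phi (s t : R) : R :=
  if Req_EM_T s 0 then t else (1 - exp (- (s * t))) / s.

Definition trans (q : gen) (t : R) (i j : state) : R :=
  let a := fst q in let b := snd q in let p := phi (a + b) t in
  match i, j with
  | S1, S1 => 1 - a * p
  | S1, S2 => a * p
  | S2, S1 => b * p
  | S2, S2 => 1 - b * p
  end.

Definition delta (t : R) : R := / 2 * exp (- t) + / 2 * exp (- (2 * t)).
Definition g1 (a : R) : R := - a ^ 2.
Definition g2 (b : R) : R := 2 - (1 - b) ^ 2.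

Definition f (t : R) (j : state) (q : gen) : R :=
  match j with
  | S1 => delta t * g1 (fst q)
  | S2 => delta t * g2 (snd q)
  end.

(** F(i,Q) = E_{i,Q}[ int_0^oo f(t, X_t, Q_{X_t}) dt ]. *)
Definition F (i : state) (q : gen) : R :=
  improper_integral
    (fun t => trans q t i S1 * f t S1 q + trans q t i S2 * f t S2 q) 0.

(** F(i, Q (x)_eps Q'): Q on [0,eps], then Q' on (eps,oo). *)
Definition F_concat (i : state) (q : gen) (eps : R) (q' : gen) : R :=
  integral
    (fun t => trans q t i S1 * f t S1 q + trans q t i S2 * f t S2 q) 0 eps
  + improper_integral
    (fun t =>
       (trans q eps i S1 * trans q' (t - eps) S1 S1
        + trans q eps i S2 * trans q' (t - eps) S2 S1) * f t S1 q'
     + (trans q eps i S1 * trans q' (t - eps) S1 S2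
        + trans q eps i S2 * trans q' (t - eps) S2 S2) * f t S2 q') eps.

(** liminf_{eps -> 0+} (F(i,Qs) - F(i,Q (x)_eps Qs)) / eps >= 0,
    written out: for every eta > 0 the quotient is eventually > -eta. *)
Definition weak_equilibrium (qs : gen) : Prop :=
  admissible qs /\
  forall (q : gen) (i : state), admissible q ->
    forall eta, 0 < eta -> exists d, 0 < d /\
      forall eps, 0 < eps -> eps < d ->
        - eta < (F i qs - F_concat i q eps qs) / eps.

Definition strong_equilibrium (qs : gen) : Prop :=
  admissible qs /\
  forall (q : gen) (i : state), admissible q ->
    exists eps, 0 < eps /\
      forall eps', 0 < eps' -> eps' <= eps -> F i qs >= F_concat i q eps' qs.

(* Main.v *)
Require Import Defs.
From Stdlib Require Import Reals Lra ClassicalEpsilon FunctionalExtensionality.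
From Coquelicot Require Import Coquelicot.
Open Scope R_scope.

Definition Dl (l x : R) : R := exp (- x) / (2 * (1 + l)) + exp (- (2 * x)) / (2 * (2 + l)).

Definition gI (A B l x0 : R) (t : R) : R := A * delta t + B * delta t * exp (- (l * (t - x0))).
Definition Gm (A B l x0 : R) (t : R) : R := - (A * Dl 0 t) - B * exp (- (l * (t - x0))) * Dl l t.

Lemma Gm_derive A B l x0 t : 0 <= l -> is_derive (Gm A B l x0) t (gI A B l x0 t).
Proof.
  intros Hl. unfold Gm, gI, Dl, delta.
  auto_derive; [repeat split; lra | ].
  replace (- (2 * t)) with (- t + - t) by ring. rewrite exp_plus.
  unfold Rminus. field. repeat split; lra.
Qed.

Lemma gI_cont A B l x0 t : continuous (gI A B l x0) t.
Proof.
  apply (@ex_derive_continuous R_AbsRing R_NormedModule). unfold gI, delta. auto_derive. auto.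
Qed.

Lemma has_integral_gI A B l x0 a b : 0 <= l ->
  has_integral (gI A B l x0) a b (Gm A B l x0 b - Gm A B l x0 a).
Proof.
  intros Hl.
  assert (H : is_RInt (gI A B l x0) a b (Gm A B l x0 b - Gm A B l x0 a)).
  { apply (is_RInt_derive (Gm A B l x0) (gI A B l x0)).
    - intros; apply Gm_derive; auto.
    - intros; apply gI_cont. }
  assert (Hex : ex_RInt (gI A B l x0) a b) by (eexists; eauto).
  exists (ex_RInt_Reals_0 _ _ _ Hex).
  rewrite <- RInt_Reals. apply is_RInt_unique. exact H.
Qed.

Lemma exp_small c : 0 < c -> forall eps, 0 < eps -> exists M, forall T, M <= T -> exp (- (c * T)) < eps.
Proof.
  intros Hc eps He. exists (- ln eps / c + 1). intros T HT.
  assert (H1 : - (c * T) < ln eps).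
  { assert (c * T >= c * (- ln eps / c + 1)) by (apply Rle_ge, Rmult_le_compat_l; lra).
    assert (c * (- ln eps / c + 1) = - ln eps + c) by (field; lra). lra. }
  rewrite <- (exp_ln eps He). apply exp_increasing. exact H1.
Qed.

Lemma Gm_lim A B l x0 : 0 <= l -> forall eps, 0 < eps -> exists M, forall T, M <= T ->
  Rabs (Gm A B l x0 T) < eps.
Proof.
  intros Hl eps He.
  set (K := Rabs A + Rabs B * exp (l * x0) + 1).
  assert (HK : 0 < K) by (unfold K; pose proof (Rabs_pos A); pose proof (Rabs_pos B);
     pose proof (exp_pos (l*x0)); nra).
  destruct (exp_small 1 Rlt_0_1 (eps / (2*K))) as [M1 HM1].
  { apply Rdiv_lt_0_compat; lra. }
  exists (Rmax M1 0). intros T HT.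
  assert (HT1 : M1 <= T) by (eapply Rle_trans; [apply Rmax_l|exact HT]).
  assert (HT0 : 0 <= T) by (eapply Rle_trans; [apply Rmax_r|exact HT]).
  specialize (HM1 T HT1). rewrite Rmult_1_l in HM1.
  assert (E1 : exp (- (l * (T - x0))) = exp (l * x0) * exp (- (l * T))).
  { rewrite <- exp_plus. f_equal. ring. }
  assert (E2 : exp (- (2 * T)) = exp (- T) * exp (- T)).
  { rewrite <- exp_plus. f_equal. ring. }
  assert (Hlt : exp (- (l * T)) <= 1).
  { rewrite <- exp_0. destruct (Req_dec (l*T) 0) as [H0|H0].
    - rewrite H0, Ropp_0. lra.
    - left. apply exp_increasing. assert (0 <= l * T) by nra. lra. }
  assert (Hx1 : exp (- T) <= 1).
  { rewrite <- exp_0. destruct (Req_dec T 0) as [H0|H0].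
    - rewrite H0, Ropp_0. lra.
    - left. apply exp_increasing. lra. }
  pose proof (exp_pos (- T)). pose proof (exp_pos (- (l*T))). pose proof (exp_pos (l*x0)).
  assert (HD : 0 <= Dl l T <= exp (- T)).
  { unfold Dl. rewrite E2. split.
    - apply Rplus_le_le_0_compat; apply Rmult_le_pos; try nra; left; apply Rinv_0_lt_compat; lra.
    - assert (exp (- T) / (2 * (1 + l)) <= exp (-T) / 2).
      { unfold Rdiv. apply Rmult_le_compat_l; [lra|]. apply Rinv_le_contravar; lra. }
      assert (exp (- T) * exp (- T) / (2 * (2 + l)) <= exp (-T) / 2).
      { unfold Rdiv. rewrite Rmult_assoc. apply Rmult_le_compat_l; [lra|].
        apply Rle_trans with (1 * / 2); [|lra].
        apply Rmult_le_compat; try lra. left; apply Rinv_0_lt_compat; lra.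
        apply Rinv_le_contravar; lra. }
      lra. }
  assert (HD0 : 0 <= Dl 0 T <= exp (- T)).
  { unfold Dl. rewrite E2. split.
    - apply Rplus_le_le_0_compat; apply Rmult_le_pos; try nra; left; apply Rinv_0_lt_compat; lra.
    - replace (exp (- T) / (2 * (1 + 0)) + exp (- T) * exp (- T) / (2 * (2 + 0)))
        with (exp (-T) * (/2 + exp (-T) / 4)) by field. nra. }
  unfold Gm. rewrite E1.
  apply Rle_lt_trans with (Rabs A * exp (- T) + Rabs B * exp (l * x0) * exp (- T)).
  { eapply Rle_trans; [apply Rabs_triang|]. rewrite Rabs_Ropp, Rabs_Ropp.
    rewrite !Rabs_mult. rewrite (Rabs_pos_eq (Dl 0 T)) by lra.
    rewrite (Rabs_pos_eq (Dl l T)) by lra. rewrite (Rabs_pos_eq (exp (l*x0))) by lra.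
    rewrite (Rabs_pos_eq (exp (- (l*T)))) by lra.
    pose proof (Rabs_pos A); pose proof (Rabs_pos B).
    apply Rplus_le_compat. apply Rmult_le_compat_l; lra.
    rewrite !Rmult_assoc. apply Rmult_le_compat_l; [lra|]. apply Rmult_le_compat_l; [lra|].
    nra. }
  apply Rle_lt_trans with (K * exp (- T)).
  { unfold K. pose proof (Rabs_pos A); pose proof (Rabs_pos B). nra. }
  apply Rlt_le_trans with (K * (eps / (2*K))).
  { apply Rmult_lt_compat_l; lra. }
  replace (K * (eps / (2*K))) with (eps/2) by (field; lra). lra.
Qed.

Lemma has_improper_gI A B l x0 a : 0 <= l ->
  has_improper_integral (gI A B l x0) a (- Gm A B l x0 a).
Proof.
  intros Hl. split.
  - intros T _. destruct (has_integral_gI A B l x0 a T Hl) as [pr _]. exists pr; auto.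
  - intros eps He. destruct (Gm_lim A B l x0 Hl eps He) as [M HM].
    exists M. intros T pr _ HT.
    destruct (has_integral_gI A B l x0 a T Hl) as [pr' Hpr'].
    rewrite (RiemannInt_P5 pr pr'), Hpr'.
    replace (Gm A B l x0 T - Gm A B l x0 a - - Gm A B l x0 a) with (Gm A B l x0 T) by ring.
    apply HM; auto.
Qed.

Lemma improper_unique f a v : has_improper_integral f a v -> improper_integral f a = v.
Proof.
  intros H. unfold improper_integral.
  destruct (epsilon_spec (inhabits 0) (fun v => has_improper_integral f a v) (ex_intro _ v H)) as [_ H2].
  set (v' := epsilon _ _) in *. destruct H as [H1 H3].
  destruct (Req_dec v' v) as [|Hne]; auto. exfalso.
  set (e := Rabs (v' - v) / 2).
  assert (He : 0 < e) by (unfold e; apply Rdiv_lt_0_compat; [apply Rabs_pos_lt; lra | lra]).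
  destruct (H2 e He) as [M1 HM1]. destruct (H3 e He) as [M2 HM2].
  set (T := Rmax a (Rmax M1 M2)).
  assert (Ha : a <= T) by apply Rmax_l.
  assert (H1' : M1 <= T) by (unfold T; eapply Rle_trans; [apply Rmax_l| apply Rmax_r]).
  assert (H2' : M2 <= T) by (unfold T; eapply Rle_trans; [apply Rmax_r| apply Rmax_r]).
  destruct (H1 T Ha) as [pr _].
  specialize (HM1 T pr Ha H1'). specialize (HM2 T pr Ha H2').
  assert (Rabs (v' - v) <= Rabs (RiemannInt pr - v') + Rabs (RiemannInt pr - v)).
  { replace (v' - v) with (- (RiemannInt pr - v') + (RiemannInt pr - v)) by ring.
    eapply Rle_trans; [apply Rabs_triang|]. rewrite Rabs_Ropp. lra. }
  unfold e in *. lra.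
Qed.

Lemma integral_unique f a b v : has_integral f a b v -> integral f a b = v.
Proof.
  intros H. unfold integral.
  destruct (epsilon_spec (inhabits 0) (fun v => has_integral f a b v) (ex_intro _ v H)) as [pr1 H1].
  destruct H as [pr2 H2]. rewrite <- H1, <- H2. apply RiemannInt_P5.
Qed.

Definition kk (q : gen) : R := g2 (snd q) - g1 (fst q).
Definition Acoef (i : state) (q : gen) : R :=
  match i with
  | S1 => g1 (fst q) + fst q * kk q / (fst q + snd q)
  | S2 => g2 (snd q) - snd q * kk q / (fst q + snd q)
  end.
Definition Bcoef (i : state) (q : gen) : R :=
  match i with
  | S1 => - (fst q * kk q / (fst q + snd q))
  | S2 => snd q * kk q / (fst q + snd q)
  end.
Definition TA (p1 p2 : R) (q : gen) : R :=
  p1 * g1 (fst q) + p2 * g2 (snd q) + kk q * (p1 * fst q - p2 * snd q) / (fst q + snd q).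
Definition TB (p1 p2 : R) (q : gen) : R :=
  - (kk q * (p1 * fst q - p2 * snd q) / (fst q + snd q)).

Definition Fcf (i : state) (q : gen) : R :=
  Acoef i q * Dl 0 0 + Bcoef i q * Dl (fst q + snd q) 0.
Definition FCcf (i : state) (q : gen) (e : R) (qs : gen) : R :=
  Acoef i q * (Dl 0 0 - Dl 0 e) + Bcoef i q * (Dl (fst q + snd q) 0 - exp (- ((fst q + snd q) * e)) * Dl (fst q + snd q) e)
  + (TA (trans q e i S1) (trans q e i S2) qs * Dl 0 e + TB (trans q e i S1) (trans q e i S2) qs * Dl (fst qs + snd qs) e).

Lemma integrand_F i q : admissible q ->
  (fun t => trans q t i S1 * Defs.f t S1 q + trans q t i S2 * Defs.f t S2 q)
  = gI (Acoef i q) (Bcoef i q) (fst q + snd q) 0.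
Proof.
  destruct q as [c d]. unfold admissible; simpl. intros [Hc Hd].
  apply functional_extensionality. intros t.
  unfold trans, phi, gI, Acoef, Bcoef, kk, Defs.f; simpl.
  replace (t - 0) with t by ring.
  destruct (Req_EM_T (c + d) 0) as [H0|H0].
  - assert (c = 0) by lra. assert (d = 0) by lra. subst. unfold Rdiv; rewrite Rplus_0_r, Rinv_0; destruct i; ring.
  - destruct i; field; auto.
Qed.

Lemma integrand_T p1 p2 e qs : admissible qs ->
  (fun t =>
       (p1 * trans qs (t - e) S1 S1 + p2 * trans qs (t - e) S2 S1) * Defs.f t S1 qs
     + (p1 * trans qs (t - e) S1 S2 + p2 * trans qs (t - e) S2 S2) * Defs.f t S2 qs)
  = gI (TA p1 p2 qs) (TB p1 p2 qs) (fst qs + snd qs) e.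
Proof.
  destruct qs as [c d]. unfold admissible; simpl. intros [Hc Hd].
  apply functional_extensionality. intros t.
  unfold trans, phi, gI, TA, TB, kk, Defs.f; simpl.
  destruct (Req_EM_T (c + d) 0) as [H0|H0].
  - assert (c = 0) by lra. assert (d = 0) by lra. subst. unfold Rdiv; rewrite Rplus_0_r, Rinv_0; ring.
  - field; auto.
Qed.

Lemma F_cf i q : admissible q -> Defs.F i q = Fcf i q.
Proof.
  intros Hq. unfold Defs.F. rewrite (integrand_F i q Hq).
  apply improper_unique.
  assert (Hs : 0 <= fst q + snd q) by (destruct Hq; lra).
  replace (Fcf i q) with (- Gm (Acoef i q) (Bcoef i q) (fst q + snd q) 0 0).
  - apply has_improper_gI; auto.
  - unfold Gm, Fcf. replace ((fst q + snd q) * (0 - 0)) with 0 by ring.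
    rewrite Ropp_0, exp_0. ring.
Qed.

Lemma FC_cf i q e qs : admissible q -> admissible qs ->
  F_concat i q e qs = FCcf i q e qs.
Proof.
  intros Hq Hqs. unfold F_concat. rewrite (integrand_F i q Hq).
  rewrite (integrand_T (trans q e i S1) (trans q e i S2) e qs Hqs).
  assert (Hs : 0 <= fst q + snd q) by (destruct Hq; lra).
  assert (Hs' : 0 <= fst qs + snd qs) by (destruct Hqs; lra).
  rewrite (integral_unique _ _ _ _ (has_integral_gI (Acoef i q) (Bcoef i q) (fst q + snd q) 0 0 e Hs)).
  rewrite (improper_unique _ _ _ (has_improper_gI (TA (trans q e i S1) (trans q e i S2) qs)
       (TB (trans q e i S1) (trans q e i S2) qs) (fst qs + snd qs) e e Hs')).
  unfold Gm, FCcf.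
  replace ((fst q + snd q) * (0 - 0)) with 0 by ring.
  replace ((fst qs + snd qs) * (e - e)) with 0 by ring.
  replace (e - 0) with e by ring.
  rewrite Ropp_0, exp_0. ring.
Qed.

Definition zz (s e : R) : R := exp (- (s * e)).
Definition Dld (l x : R) : R := - exp (- x) / (2 * (1 + l)) - exp (- (2 * x)) / (2 + l).
Definition Dldd (l x : R) : R := exp (- x) / (2 * (1 + l)) + 2 * exp (- (2 * x)) / (2 + l).

Definition Hgen (K0 A B s m c1 c2 c3 c4 e : R) : R :=
  K0 - A * (Dl 0 0 - Dl 0 e) - B * (Dl s 0 - zz s e * Dl s e)
  - (c1 + c2 * zz s e) * Dl 0 e - (c3 + c4 * zz s e) * Dl m e.
Definition H1gen (A B s m c1 c2 c3 c4 e : R) : R :=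
  A * Dld 0 e + B * (- s * zz s e * Dl s e + zz s e * Dld s e)
  + c2 * s * zz s e * Dl 0 e - (c1 + c2 * zz s e) * Dld 0 e
  + c4 * s * zz s e * Dl m e - (c3 + c4 * zz s e) * Dld m e.
Definition h2gen (A B s m c1 c2 c3 c4 : R) : R :=
  A * Dldd 0 0 + B * (s ^ 2 * Dl s 0 - 2 * s * Dld s 0 + Dldd s 0)
  - c2 * s ^ 2 * Dl 0 0 + 2 * c2 * s * Dld 0 0 - (c1 + c2) * Dldd 0 0
  - c4 * s ^ 2 * Dl m 0 + 2 * c4 * s * Dld m 0 - (c3 + c4) * Dldd m 0.

Lemma Hgen_derive K0 A B s m c1 c2 c3 c4 x : 0 <= s -> 0 <= m ->
  is_derive (Hgen K0 A B s m c1 c2 c3 c4) x (H1gen A B s m c1 c2 c3 c4 x).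
Proof.
  intros Hs Hm. unfold Hgen, H1gen, zz, Dl, Dld.
  auto_derive; [repeat split; lra | ].
  field. repeat split; lra.
Qed.

Lemma H1gen_derive A B s m c1 c2 c3 c4 : 0 <= s -> 0 <= m ->
  is_derive (H1gen A B s m c1 c2 c3 c4) 0 (h2gen A B s m c1 c2 c3 c4).
Proof.
  intros Hs Hm. unfold h2gen, H1gen, zz, Dl, Dld, Dldd.
  auto_derive; [repeat split; lra | ].
  rewrite ?Rmult_0_r, ?Ropp_0, ?exp_0.
  field. repeat split; lra.
Qed.

Lemma pos_near0 (H H1 : R -> R) h2 :
  (forall x, is_derive H x (H1 x)) -> is_derive H1 0 h2 -> H 0 = 0 ->
  (H1 0 > 0 \/ (H1 0 = 0 /\ h2 > 0)) ->
  exists eps, 0 < eps /\ forall e, 0 < e -> e <= eps -> H e > 0.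
Proof.
  intros HD HD1 H0 Hc.
  apply is_derive_Reals in HD1.
  assert (Hpos : exists d, 0 < d /\ forall c, 0 < c < d -> H1 c > 0).
  { destruct Hc as [Hc | [Hc Hh]].
    - destruct (HD1 1 Rlt_0_1) as [d Hd].
      exists (Rmin d (H1 0 / (Rabs h2 + 1))). split.
      + apply Rmin_pos; [apply cond_pos|]. apply Rdiv_lt_0_compat; [lra|].
        pose proof (Rabs_pos h2); lra.
      + intros c [Hc0 Hcd].
        assert (Hcd1 : c < d) by (eapply Rlt_le_trans; [exact Hcd | apply Rmin_l]).
        assert (Hcd2 : c < H1 0 / (Rabs h2 + 1)) by (eapply Rlt_le_trans; [exact Hcd | apply Rmin_r]).
        assert (Hne : c <> 0) by lra.
        assert (Hab : Rabs c < d) by (rewrite Rabs_pos_eq; lra).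
        specialize (Hd c Hne Hab). rewrite Rplus_0_l in Hd.
        apply Rabs_def2 in Hd. destruct Hd as [Hd1 Hd2].
        assert (Hq : (H1 c - H1 0) / c > h2 - 1) by lra.
        assert (Hq2 : H1 c - H1 0 > c * (h2 - 1)).
        { apply (Rmult_gt_compat_l c) in Hq; [|lra].
          replace (c * ((H1 c - H1 0) / c)) with (H1 c - H1 0) in Hq by (field; lra). lra. }
        pose proof (Rabs_pos h2). pose proof (Rle_abs (- h2)). rewrite Rabs_Ropp in *.
        assert (c * (Rabs h2 + 1) < H1 0).
        { apply (Rmult_lt_compat_r (Rabs h2 + 1)) in Hcd2; [|lra].
          replace (H1 0 / (Rabs h2 + 1) * (Rabs h2 + 1)) with (H1 0) in Hcd2 by (field; lra). lra. }
        nra.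
    - destruct (HD1 (h2/2)) as [d Hd]; [lra|].
      exists d. split; [apply cond_pos|].
      intros c [Hc0 Hcd].
      assert (Hne : c <> 0) by lra.
      assert (Hab : Rabs c < d) by (rewrite Rabs_pos_eq; lra).
      specialize (Hd c Hne Hab). rewrite Rplus_0_l, Hc in Hd.
      apply Rabs_def2 in Hd. destruct Hd as [Hd1 Hd2].
      assert (Hq : (H1 c - 0) / c > 0) by lra.
      replace ((H1 c - 0) / c) with (H1 c / c) in Hq by (unfold Rdiv; ring).
      apply Rlt_gt. apply (Rmult_lt_reg_r (/ c)). apply Rinv_0_lt_compat; lra.
      rewrite Rmult_0_l. exact Hq. }
  destruct Hpos as [d [Hd Hpos]].
  exists (d / 2). split; [lra|]. intros e He Hed.
  destruct (MVT_cor2 H H1 0 e He) as [c [Heq Hcc]].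
  { intros c _. apply is_derive_Reals. apply HD. }
  rewrite H0 in Heq. assert (H1 c > 0) by (apply Hpos; lra).
  replace (H e) with (H1 c * (e - 0)) by lra. apply Rmult_gt_0_compat; lra.
Qed.

Lemma deriv_nonneg (H : R -> R) L :
  is_derive H 0 L -> H 0 = 0 ->
  (forall eta, 0 < eta -> exists d, 0 < d /\ forall e, 0 < e -> e < d -> - eta < H e / e) ->
  0 <= L.
Proof.
  intros HD H0 Hw. destruct (Rle_lt_dec 0 L) as [|HL]; auto. exfalso.
  apply is_derive_Reals in HD.
  destruct (Hw (- L / 2)) as [d [Hd Hw']]; [lra|].
  destruct (HD (- L / 2)) as [dl Hdl]; [lra|].
  set (e := Rmin d dl / 2).
  assert (Hm : 0 < Rmin d dl) by (apply Rmin_pos; [lra| apply cond_pos]).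
  assert (He0 : 0 < e) by (unfold e; lra).
  assert (He1 : e < d) by (unfold e; pose proof (Rmin_l d dl); lra).
  assert (He2 : e < dl) by (unfold e; pose proof (Rmin_r d dl); lra).
  specialize (Hw' e He0 He1).
  assert (Hne : e <> 0) by lra.
  assert (Hab : Rabs e < dl) by (rewrite Rabs_pos_eq; lra).
  specialize (Hdl e Hne Hab). rewrite Rplus_0_l, H0 in Hdl.
  replace ((H e - 0) / e) with (H e / e) in Hdl by (unfold Rdiv; ring).
  apply Rabs_def2 in Hdl. lra.
Qed.

Definition pb1 (i : state) (q : gen) : R :=
  match i with S1 => 1 - fst q / (fst q + snd q) | S2 => snd q / (fst q + snd q) end.
Definition pb2 (i : state) (q : gen) : R :=
  match i with S1 => fst q / (fst q + snd q) | S2 => 1 - snd q / (fst q + snd q) end.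
Definition rs1 (i : state) (q : gen) : R :=
  match i with S1 => fst q / (fst q + snd q) | S2 => - (snd q / (fst q + snd q)) end.
Definition rs2 (i : state) (q : gen) : R :=
  match i with S1 => - (fst q / (fst q + snd q)) | S2 => snd q / (fst q + snd q) end.

Lemma FC_H i q qs e : 0 < fst q + snd q ->
  Fcf i qs - FCcf i q e qs =
  Hgen (Fcf i qs) (Acoef i q) (Bcoef i q) (fst q + snd q) (fst qs + snd qs)
    (TA (pb1 i q) (pb2 i q) qs) (TA (rs1 i q) (rs2 i q) qs)
    (TB (pb1 i q) (pb2 i q) qs) (TB (rs1 i q) (rs2 i q) qs) e.
Proof.
  destruct q as [a b], qs as [c d]; simpl. intros Hs.
  unfold FCcf, Hgen, trans, phi, zz, TA, TB, pb1, pb2, rs1, rs2; simpl.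
  destruct (Req_EM_T (a + b) 0) as [|_]; [lra|].
  unfold Rdiv. set (im := / (c + d)).
  destruct i; field; lra.
Qed.

Lemma FC_H0 i qs e :
  Fcf i qs - FCcf i (0, 0) e qs =
  Hgen (Fcf i qs) (Acoef i (0,0)) 0 0 (fst qs + snd qs)
    (TA (match i with S1 => 1 | S2 => 0 end) (match i with S1 => 0 | S2 => 1 end) qs) 0
    (TB (match i with S1 => 1 | S2 => 0 end) (match i with S1 => 0 | S2 => 1 end) qs) 0 e.
Proof.
  destruct qs as [c d]; simpl.
  unfold FCcf, Hgen, trans, phi, zz, Bcoef; simpl.
  destruct (Req_EM_T (0 + 0) 0) as [_|]; [|lra].
  unfold Rdiv. rewrite Rplus_0_r, Rinv_0.
  rewrite ?Rmult_0_l, ?Rminus_0_r, ?Ropp_0. destruct i; ring.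
Qed.

Lemma Dl_0 l : Dl l 0 = 1 / (2 * (1 + l)) + 1 / (2 * (2 + l)).
Proof. unfold Dl. rewrite Rmult_0_r, Ropp_0, exp_0. reflexivity. Qed.
Lemma Dld_0 l : Dld l 0 = - 1 / (2 * (1 + l)) - 1 / (2 + l).
Proof. unfold Dld. rewrite Rmult_0_r, Ropp_0, exp_0. reflexivity. Qed.
Lemma Dldd_0 l : Dldd l 0 = 1 / (2 * (1 + l)) + 2 / (2 + l).
Proof. unfold Dldd. rewrite Rmult_0_r, Ropp_0, exp_0, Rmult_1_r. reflexivity. Qed.
Lemma zz_0 s : zz s 0 = 1.
Proof. unfold zz. rewrite Rmult_0_r, Ropp_0, exp_0. reflexivity. Qed.

Definition qstar : gen := (5/12, 7/12).

Lemma H0_s i a b : 0 < a + b ->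
  Hgen (Fcf i qstar) (Acoef i (a,b)) (Bcoef i (a,b)) (a + b) (fst qstar + snd qstar)
    (TA (pb1 i (a,b)) (pb2 i (a,b)) qstar) (TA (rs1 i (a,b)) (rs2 i (a,b)) qstar)
    (TB (pb1 i (a,b)) (pb2 i (a,b)) qstar) (TB (rs1 i (a,b)) (rs2 i (a,b)) qstar) 0 = 0.
Proof.
  intros Hs. unfold Hgen. rewrite zz_0, !Dl_0.
  unfold Fcf, Acoef, Bcoef, TA, TB, pb1, pb2, rs1, rs2, kk, g1, g2, qstar; simpl.
  rewrite !Dl_0. destruct i; field; lra.
Qed.

Lemma H1_s1 a b : 0 < a + b ->
  H1gen (Acoef S1 (a,b)) (Bcoef S1 (a,b)) (a + b) (fst qstar + snd qstar)
    (TA (pb1 S1 (a,b)) (pb2 S1 (a,b)) qstar) (TA (rs1 S1 (a,b)) (rs2 S1 (a,b)) qstar)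
    (TB (pb1 S1 (a,b)) (pb2 S1 (a,b)) qstar) (TB (rs1 S1 (a,b)) (rs2 S1 (a,b)) qstar) 0
  = (a - 5/12) ^ 2.
Proof.
  intros Hs. unfold H1gen. rewrite zz_0, !Dl_0, !Dld_0.
  unfold Acoef, Bcoef, TA, TB, pb1, pb2, rs1, rs2, kk, g1, g2, qstar; simpl.
  field; lra.
Qed.

Lemma H1_s2 a b : 0 < a + b ->
  H1gen (Acoef S2 (a,b)) (Bcoef S2 (a,b)) (a + b) (fst qstar + snd qstar)
    (TA (pb1 S2 (a,b)) (pb2 S2 (a,b)) qstar) (TA (rs1 S2 (a,b)) (rs2 S2 (a,b)) qstar)
    (TB (pb1 S2 (a,b)) (pb2 S2 (a,b)) qstar) (TB (rs1 S2 (a,b)) (rs2 S2 (a,b)) qstar) 0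
  = (b - 7/12) ^ 2.
Proof.
  intros Hs. unfold H1gen. rewrite zz_0, !Dl_0, !Dld_0.
  unfold Acoef, Bcoef, TA, TB, pb1, pb2, rs1, rs2, kk, g1, g2, qstar; simpl.
  field; lra.
Qed.

Lemma h2_s1 b : 0 < 5/12 + b ->
  h2gen (Acoef S1 (5/12,b)) (Bcoef S1 (5/12,b)) (5/12 + b) (fst qstar + snd qstar)
    (TA (pb1 S1 (5/12,b)) (pb2 S1 (5/12,b)) qstar) (TA (rs1 S1 (5/12,b)) (rs2 S1 (5/12,b)) qstar)
    (TB (pb1 S1 (5/12,b)) (pb2 S1 (5/12,b)) qstar) (TB (rs1 S1 (5/12,b)) (rs2 S1 (5/12,b)) qstar)
  = 5/12 * (b - 7/12) ^ 2.
Proof.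
  intros Hs. unfold h2gen. rewrite !Dl_0, !Dld_0, !Dldd_0.
  unfold Acoef, Bcoef, TA, TB, pb1, pb2, rs1, rs2, kk, g1, g2, qstar; simpl.
  field; lra.
Qed.

Lemma h2_s2 a : 0 < a + 7/12 ->
  h2gen (Acoef S2 (a,7/12)) (Bcoef S2 (a,7/12)) (a + 7/12) (fst qstar + snd qstar)
    (TA (pb1 S2 (a,7/12)) (pb2 S2 (a,7/12)) qstar) (TA (rs1 S2 (a,7/12)) (rs2 S2 (a,7/12)) qstar)
    (TB (pb1 S2 (a,7/12)) (pb2 S2 (a,7/12)) qstar) (TB (rs1 S2 (a,7/12)) (rs2 S2 (a,7/12)) qstar)
  = 7/12 * (a - 5/12) ^ 2.
Proof.
  intros Hs. unfold h2gen. rewrite !Dl_0, !Dld_0, !Dldd_0.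
  unfold Acoef, Bcoef, TA, TB, pb1, pb2, rs1, rs2, kk, g1, g2, qstar; simpl.
  field; lra.
Qed.

Lemma H_star i e :
  Hgen (Fcf i qstar) (Acoef i qstar) (Bcoef i qstar) (fst qstar + snd qstar) (fst qstar + snd qstar)
    (TA (pb1 i qstar) (pb2 i qstar) qstar) (TA (rs1 i qstar) (rs2 i qstar) qstar)
    (TB (pb1 i qstar) (pb2 i qstar) qstar) (TB (rs1 i qstar) (rs2 i qstar) qstar) e = 0.
Proof.
  unfold Hgen, zz. rewrite !Dl_0.
  unfold Fcf, Acoef, Bcoef, TA, TB, pb1, pb2, rs1, rs2, kk, g1, g2, qstar; simpl.
  rewrite !Dl_0. unfold Dl.
  destruct i; field.
Qed.

Lemma H0_0 i :
  Hgen (Fcf i qstar) (Acoef i (0,0)) 0 0 (fst qstar + snd qstar)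
    (TA (match i with S1 => 1 | S2 => 0 end) (match i with S1 => 0 | S2 => 1 end) qstar) 0
    (TB (match i with S1 => 1 | S2 => 0 end) (match i with S1 => 0 | S2 => 1 end) qstar) 0 0 = 0.
Proof.
  unfold Hgen. rewrite zz_0, !Dl_0.
  unfold Fcf, Acoef, Bcoef, TA, TB, kk, g1, g2, qstar; simpl.
  rewrite !Dl_0. destruct i; unfold Rdiv; rewrite ?Rplus_0_r, ?Rinv_0; field.
Qed.

Lemma H1_0 i :
  H1gen (Acoef i (0,0)) 0 0 (fst qstar + snd qstar)
    (TA (match i with S1 => 1 | S2 => 0 end) (match i with S1 => 0 | S2 => 1 end) qstar) 0
    (TB (match i with S1 => 1 | S2 => 0 end) (match i with S1 => 0 | S2 => 1 end) qstar) 0 0 > 0.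
Proof.
  unfold H1gen. rewrite zz_0, !Dl_0, !Dld_0.
  unfold Fcf, Acoef, Bcoef, TA, TB, kk, g1, g2, qstar; simpl.
  destruct i; unfold Rdiv; rewrite ?Rplus_0_r, ?Rinv_0; field_simplify; lra.
Qed.

Lemma near_ok K0 A B s m c1 c2 c3 c4 : 0 <= s -> 0 <= m ->
  Hgen K0 A B s m c1 c2 c3 c4 0 = 0 ->
  (H1gen A B s m c1 c2 c3 c4 0 > 0 \/ (H1gen A B s m c1 c2 c3 c4 0 = 0 /\ h2gen A B s m c1 c2 c3 c4 > 0)) ->
  exists eps, 0 < eps /\ forall e, 0 < e -> e <= eps -> Hgen K0 A B s m c1 c2 c3 c4 e >= 0.
Proof.
  intros Hs Hm H0 Hc.
  destruct (pos_near0 (Hgen K0 A B s m c1 c2 c3 c4) (H1gen A B s m c1 c2 c3 c4)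
             (h2gen A B s m c1 c2 c3 c4)) as [eps [He Hp]]; auto.
  - intros x; apply Hgen_derive; auto.
  - apply H1gen_derive; auto.
  - exists eps. split; auto. intros e H1 H2. left. apply Hp; auto.
Qed.

Lemma qstar_adm : admissible qstar.
Proof. unfold admissible, qstar; simpl; lra. Qed.

Lemma strong_qstar : strong_equilibrium qstar.
Proof.
  split; [apply qstar_adm|].
  intros [a b] i Hq.
  assert (Hq' := Hq). destruct Hq' as [Ha Hb]; simpl in Ha, Hb.
  cut (exists eps, 0 < eps /\ forall e, 0 < e -> e <= eps -> Fcf i qstar - FCcf i (a,b) e qstar >= 0).
  { intros [eps [He Hp]]. exists eps. split; auto. intros e H1 H2.
    rewrite F_cf by apply qstar_adm. rewrite FC_cf by (auto; apply qstar_adm).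
    specialize (Hp e H1 H2). lra. }
  assert (Hm : 0 <= fst qstar + snd qstar) by (unfold qstar; simpl; lra).
  destruct (Req_dec (a + b) 0) as [Hs0|Hs0].
  - assert (a = 0) by lra. assert (b = 0) by lra. subst.
    setoid_rewrite FC_H0.
    apply near_ok; [lra | exact Hm | apply H0_0 | left; apply H1_0].
  - assert (Hs : 0 < a + b) by lra.
    setoid_rewrite (FC_H i (a,b) qstar); [|simpl; lra].
    simpl fst; simpl snd.
    destruct i.
    + destruct (Req_dec a (5/12)) as [Ha5|Ha5].
      * destruct (Req_dec b (7/12)) as [Hb7|Hb7].
        -- subst. change (5/12, 7/12) with qstar. exists 1. split; [lra|].
           intros e _ _. rewrite H_star. lra.
        -- apply near_ok; [lra|auto| apply H0_s; auto|]. right. split.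
           ++ rewrite H1_s1 by auto. rewrite Ha5. ring.
           ++ subst a. rewrite h2_s1 by auto.
              assert (0 < (b - 7/12)^2) by (simpl; rewrite Rmult_1_r; apply Rsqr_pos_lt; lra). nra.
      * apply near_ok; [lra|auto| apply H0_s; auto|]. left.
        rewrite H1_s1 by auto. simpl; rewrite Rmult_1_r; apply Rsqr_pos_lt; lra.
    + destruct (Req_dec b (7/12)) as [Hb7|Hb7].
      * destruct (Req_dec a (5/12)) as [Ha5|Ha5].
        -- subst. change (5/12, 7/12) with qstar. exists 1. split; [lra|].
           intros e _ _. rewrite H_star. lra.
        -- apply near_ok; [lra|auto| apply H0_s; auto|]. right. split.
           ++ rewrite H1_s2 by auto. rewrite Hb7. ring.
           ++ subst b. rewrite h2_s2 by auto.
              assert (0 < (a - 5/12)^2) by (simpl; rewrite Rmult_1_r; apply Rsqr_pos_lt; lra). nra.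
      * apply near_ok; [lra|auto| apply H0_s; auto|]. left.
        rewrite H1_s2 by auto. simpl; rewrite Rmult_1_r; apply Rsqr_pos_lt; lra.
Qed.

Lemma H0_gen i a b c d : 0 < a + b -> 0 <= c -> 0 <= d ->
  Hgen (Fcf i (c,d)) (Acoef i (a,b)) (Bcoef i (a,b)) (a + b) (c + d)
    (TA (pb1 i (a,b)) (pb2 i (a,b)) (c,d)) (TA (rs1 i (a,b)) (rs2 i (a,b)) (c,d))
    (TB (pb1 i (a,b)) (pb2 i (a,b)) (c,d)) (TB (rs1 i (a,b)) (rs2 i (a,b)) (c,d)) 0 = 0.
Proof.
  intros Hs Hc Hd. unfold Hgen. rewrite zz_0, !Dl_0.
  unfold Fcf, Acoef, Bcoef, TA, TB, pb1, pb2, rs1, rs2, kk, g1, g2; simpl.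
  rewrite !Dl_0. unfold Rdiv. set (im := / (c + d)).
  destruct i; field; lra.
Qed.

Lemma L1_formula x c d : 0 <= x -> 0 <= c -> 0 <= d ->
  H1gen (Acoef S1 (x,1)) (Bcoef S1 (x,1)) (x + 1) (c + d)
    (TA (pb1 S1 (x,1)) (pb2 S1 (x,1)) (c,d)) (TA (rs1 S1 (x,1)) (rs2 S1 (x,1)) (c,d))
    (TB (pb1 S1 (x,1)) (pb2 S1 (x,1)) (c,d)) (TB (rs1 S1 (x,1)) (rs2 S1 (x,1)) (c,d)) 0
  = (x - c) * (x + c - kk (c,d) * Dl (c + d) 0).
Proof.
  intros Hx Hc Hd. unfold H1gen. rewrite zz_0, !Dl_0, !Dld_0.
  unfold Acoef, Bcoef, TA, TB, pb1, pb2, rs1, rs2, kk, g1, g2; simpl.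
  destruct (Req_dec (c + d) 0) as [H0|H0].
  - assert (c = 0) by lra. assert (d = 0) by lra. subst.
    unfold Rdiv. rewrite ?Rplus_0_r, ?Rinv_0. field. lra.
  - field. repeat split; lra.
Qed.

Lemma L2_formula y c d : 0 <= y -> 0 <= c -> 0 <= d ->
  H1gen (Acoef S2 (1,y)) (Bcoef S2 (1,y)) (1 + y) (c + d)
    (TA (pb1 S2 (1,y)) (pb2 S2 (1,y)) (c,d)) (TA (rs1 S2 (1,y)) (rs2 S2 (1,y)) (c,d))
    (TB (pb1 S2 (1,y)) (pb2 S2 (1,y)) (c,d)) (TB (rs1 S2 (1,y)) (rs2 S2 (1,y)) (c,d)) 0
  = (y - d) * (y + d - (2 - kk (c,d) * Dl (c + d) 0)).
Proof.
  intros Hy Hc Hd. unfold H1gen. rewrite zz_0, !Dl_0, !Dld_0.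
  unfold Acoef, Bcoef, TA, TB, pb1, pb2, rs1, rs2, kk, g1, g2; simpl.
  destruct (Req_dec (c + d) 0) as [H0|H0].
  - assert (c = 0) by lra. assert (d = 0) by lra. subst.
    unfold Rdiv. rewrite ?Rplus_0_r, ?Rinv_0. field. lra.
  - field. repeat split; lra.
Qed.

Lemma weak_L i a b c d : weak_equilibrium (c,d) -> 0 <= a -> 0 <= b -> 0 < a + b ->
  0 <= H1gen (Acoef i (a,b)) (Bcoef i (a,b)) (a + b) (c + d)
    (TA (pb1 i (a,b)) (pb2 i (a,b)) (c,d)) (TA (rs1 i (a,b)) (rs2 i (a,b)) (c,d))
    (TB (pb1 i (a,b)) (pb2 i (a,b)) (c,d)) (TB (rs1 i (a,b)) (rs2 i (a,b)) (c,d)) 0.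
Proof.
  intros [Hadm W] Ha Hb Hs.
  assert (Hq : admissible (a,b)) by (split; simpl; lra).
  destruct Hadm as [Hc Hd]; simpl in Hc, Hd.
  apply (deriv_nonneg (Hgen (Fcf i (c,d)) (Acoef i (a,b)) (Bcoef i (a,b)) (a + b) (c + d)
    (TA (pb1 i (a,b)) (pb2 i (a,b)) (c,d)) (TA (rs1 i (a,b)) (rs2 i (a,b)) (c,d))
    (TB (pb1 i (a,b)) (pb2 i (a,b)) (c,d)) (TB (rs1 i (a,b)) (rs2 i (a,b)) (c,d)))).
  - apply Hgen_derive; lra.
  - apply H0_gen; auto.
  - intros eta Heta. destruct (W (a,b) i Hq eta Heta) as [dd [Hdd Hw]].
    exists dd. split; auto. intros e He1 He2.
    specialize (Hw e He1 He2).
    assert (Hqs : admissible (c,d)) by (split; simpl; lra).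
    rewrite F_cf in Hw by auto. rewrite FC_cf in Hw by auto.
    rewrite (FC_H i (a,b) (c,d) e) in Hw by (simpl; lra). simpl in Hw. exact Hw.
Qed.

Lemma Dl_bounds m : 0 <= m -> 0 < Dl m 0 /\ Dl m 0 * (1 + m) <= 1.
Proof.
  intros Hm. rewrite Dl_0. split.
  - apply Rplus_lt_0_compat; apply Rdiv_lt_0_compat; lra.
  - replace ((1 / (2 * (1 + m)) + 1 / (2 * (2 + m))) * (1 + m)) with (1/2 + (1 + m) / (2 * (2 + m)))
      by (field; lra).
    assert ((1 + m) / (2 * (2 + m)) <= 1/2).
    { apply (Rmult_le_reg_r (2 * (2 + m))); [lra|].
      replace ((1 + m) / (2 * (2 + m)) * (2 * (2 + m))) with (1 + m) by (field; lra). lra. }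
    lra.
Qed.

Lemma min_cond c M : 0 <= c -> (forall x, 0 <= x -> 0 <= (x - c) * (x + c - M)) ->
  (0 <= M /\ c = M / 2) \/ (M < 0 /\ c = 0).
Proof.
  intros Hc H. destruct (Rle_lt_dec 0 M) as [HM|HM].
  - left. split; auto. specialize (H (M/2) ltac:(lra)).
    replace ((M / 2 - c) * (M / 2 + c - M)) with (- ((M/2 - c) * (M/2 - c))) in H by field.
    assert (0 <= (M/2 - c) * (M/2 - c)) by (pose proof (Rle_0_sqr (M/2 - c)); unfold Rsqr in *; lra).
    assert (Hz : (M/2 - c) * (M/2 - c) = 0) by lra.
    apply Rmult_integral in Hz. destruct Hz; lra.
  - right. split; auto. destruct (Req_dec c 0) as [|Hne]; auto.
    specialize (H (c/2) ltac:(lra)). nra.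
Qed.

Lemma final_alg c d : 0 <= c -> 0 <= d ->
  (forall x, 0 <= x -> 0 <= (x - c) * (x + c - kk (c,d) * Dl (c + d) 0)) ->
  (forall y, 0 <= y -> 0 <= (y - d) * (y + d - (2 - kk (c,d) * Dl (c + d) 0))) ->
  c = 5/12 /\ d = 7/12.
Proof.
  intros Hc Hd H1 H2.
  destruct (Dl_bounds (c + d) ltac:(lra)) as [Hw1 Hw2].
  set (w := Dl (c + d) 0) in *.
  assert (Hwdef : w = Dl (c + d) 0) by reflexivity.
  assert (Hk : kk (c,d) = 2 - (1 - d)^2 + c^2) by (unfold kk, g1, g2; simpl; ring).
  rewrite Hk in H1, H2.
  set (M := (2 - (1 - d)^2 + c^2) * w) in *.
  assert (HMdef : M = (2 - (1 - d)^2 + c^2) * w) by reflexivity.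
  clearbody M w.
  destruct (min_cond c M Hc H1) as [[HM HcM]|[HM Hc0]];
  destruct (min_cond d (2 - M) Hd H2) as [[HN HdN]|[HN Hd0]].
  - assert (Hs : c + d = 1) by lra.
    assert (Hw : w = 5/12) by (rewrite Hwdef, Hs, Dl_0; field).
    assert (HM' : M = 5/6).
    { rewrite HMdef, Hw. replace (1 - d) with c by lra. field. }
    split; lra.
  - exfalso.
    subst d.
    assert (c > 1) by lra.
    replace (c + 0) with c in Hw2 by ring.
    assert (Hk1 : 0 < 2 - (1 - 0)^2 + c^2) by nra.
    (* 2c = (1 + c^2) w and w (1+c) <= 1 *)
    assert (2 * c * (1 + c) <= 2 - (1 - 0)^2 + c^2).
    { replace (2 * c) with ((2 - (1 - 0) ^ 2 + c ^ 2) * w) by lra.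
      replace ((2 - (1 - 0) ^ 2 + c ^ 2) * w * (1 + c)) with ((2 - (1 - 0) ^ 2 + c ^ 2) * (w * (1 + c))) by ring.
      rewrite <- (Rmult_1_r (2 - (1 - 0) ^ 2 + c ^ 2)) at 2.
      apply Rmult_le_compat_l; lra. }
    simpl in *. nra.
  - exfalso.
    subst c.
    replace (0 + d) with d in Hw2 by ring.
    assert (HMneg : (2 - (1 - d)^2 + 0^2) < 0).
    { destruct (Rle_lt_dec 0 (2 - (1 - d)^2 + 0^2)); auto. rewrite HMdef in HM. nra. }
    assert (M * (1 + d) >= 2 - (1 - d)^2 + 0^2).
    { rewrite HMdef. replace ((2 - (1 - d) ^ 2 + 0 ^ 2) * w * (1 + d)) with ((2 - (1 - d) ^ 2 + 0 ^ 2) * (w * (1 + d))) by ring.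
      rewrite <- (Rmult_1_r (2 - (1 - d) ^ 2 + 0 ^ 2)) at 2.
      apply Rle_ge. apply Rmult_le_compat_neg_l; lra. }
    assert (1 - d = M / 2) by lra.
    simpl in *. nra.
  - exfalso. lra.
Qed.

Lemma unique_eq qs : weak_equilibrium qs -> qs = (5/12, 7/12).
Proof.
  intros W. destruct qs as [c d].
  assert (Hadm := proj1 W). destruct Hadm as [Hc Hd]; simpl in Hc, Hd.
  destruct (final_alg c d Hc Hd) as [-> ->]; auto.
  - intros x Hx. rewrite <- L1_formula by auto. apply (weak_L S1 x 1 c d W); lra.
  - intros y Hy. rewrite <- L2_formula by auto. apply (weak_L S2 1 y c d W); lra.
Qed.

Lemma weak_of_strong qs : strong_equilibrium qs -> weak_equilibrium qs.
Proof.
  intros [Ha S]. split; auto. intros q i Hq eta Heta.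
  destruct (S q i Hq) as [eps [He Hs]]. exists eps. split; auto.
  intros e He1 He2. specialize (Hs e He1 ltac:(lra)).
  assert (0 <= (Defs.F i qs - F_concat i q e qs) / e).
  { apply Rdiv_le_0_compat; lra. }
  lra.
Qed.

Theorem mainTheorem12 :
  weak_equilibrium (5 / 12, 7 / 12) /\
  (forall qs : gen, weak_equilibrium qs -> qs = (5 / 12, 7 / 12)) /\
  strong_equilibrium (5 / 12, 7 / 12).
Proof.
  split; [|split].
  - apply weak_of_strong. exact strong_qstar.
  - exact unique_eq.
  - exact strong_qstar.
Qed.
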